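(* Let $m\geq\beta\geq 1$ be integers and let $G^*$ be a graph with maximum $q$ among all graphs in $\mathfrak{G}_{m,\geq\beta}$. Let $X^*$ be a principal eigenvector of $Q(G^* )$ with coordinates $x^*_v$, let $M^*(G^* )$ be a matching of $G^*$ extremal to $X^*$, and let $u_1v_1,\ldots,u_kv_k$ ($k=\beta(G^* )$) be an ordering of $M^*(G^* )$ proper to $X^*$. Let $E_1=M^*(G^* )\cup\{v_1v : v\in N_{G^*}(v_1)\}$ and $E_2=E(G^* )\setminus E_1$. If $E_2\neq\emptyset$, then either $u_1v_2,\,u_2v_1,\,v_1v_2\in E(G^* )$ (so $G^*$ contains the graph $H_1$ on $\{u_1,v_1,u_2,v_2\}$ with edges $u_1v_1,u_2v_2,u_1v_2,u_2v_1,v_1v_2$), or $k\geq 3$ and $v_1v_2,\,v_2v_3,\,v_1v_3\in E(G^* )$ (so $G^*$ contains the graph $H_2$ on $\{u_1,v_1,u_2,v_2,u_3,v_3\}$ with edges $u_1v_1,u_2v_2,u_3v_3,v_1v_2,v_2v_3,v_1v_3$).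
   Context: All graphs are finite, simple and undirected (isolated vertices allowed). $Q(G)=D(G)+A(G)$ is the signless Laplacian matrix and $q(G)$ its largest eigenvalue; a principal eigenvector of $Q(G)$ is a nonnegative unit vector $X$ with $Q(G)X=q(G)X$. $\beta(G)$ is the matching number. $\mathfrak{G}_{m,\geq\beta}$ is the set of graphs with exactly $m$ edges and matching number at least $\beta$. For a graph $G$ with at least one edge and a principal eigenvector $X$ (coordinates $x_v$), a matching $M^*(G)$ is extremal to $X$ if it is a maximum matching and $\sum_{uv\in M^*(G)}(x_u+x_v)^2=\max_M\sum_{uv\in M}(x_u+x_v)^2$ over all maximum matchings $M$. An ordering $u_1v_1,\ldots,u_kv_k$ of the edges of $M^*(G^* )$ (with a designated labelling of the endpoints of each edge) is proper to $X^*$ if for each $i$: (i) $x^*_{v_i}\geq x^*_{u_i}$; (ii) $x^*_{v_i}\geq x^*_{v_{i+1}}$ (for $i<k$); (iii) $x^*_{u_i}\geq x^*_{u_{i+1}}$ whenever $x^*_{v_i}=x^*_{v_{i+1}}$ (for $i<k$). *)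

(* Defs.v *)
From mathcomp Require Import all_boot all_order all_algebra.
From mathcomp Require Import reals.
Set Implicit Arguments. Unset Strict Implicit. Unset Printing Implicit Defensive.
Import Order.TTheory GRing.Theory Num.Theory.
Local Open Scope ring_scope.

Definition simple_graph (n : nat) (adj : rel 'I_n) : Prop :=
  symmetric adj /\ irreflexive adj.

Definition is_edge (n : nat) (adj : rel 'I_n) (e : {set 'I_n}) : bool :=
  [exists x, exists y, adj x y && (e == [set x; y])].

Definition edges (n : nat) (adj : rel 'I_n) : {set {set 'I_n}} :=
  [set e | is_edge adj e].

Definition nedges (n : nat) (adj : rel 'I_n) : nat := #|edges adj|.

Definition nbhd (n : nat) (adj : rel 'I_n) (v : 'I_n) : {set 'I_n} :=
  [set w | adj v w].
Definition deg (n : nat) (adj : rel 'I_n) (v : 'I_n) : nat := #|nbhd adj v|.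

Definition is_matching (n : nat) (adj : rel 'I_n) (M : {set {set 'I_n}}) : bool :=
  (M \subset edges adj) &&
  [forall e1 in M, forall e2 in M, (e1 != e2) ==> [disjoint e1 & e2]].

Definition matching_number (n : nat) (adj : rel 'I_n) : nat :=
  \max_(M : {set {set 'I_n}} | is_matching adj M) #|M|.

Definition is_max_matching (n : nat) (adj : rel 'I_n) (M : {set {set 'I_n}}) : bool :=
  is_matching adj M && (#|M| == matching_number adj).

Definition signless_laplacian (R : realType) (n : nat) (adj : rel 'I_n) : 'M[R]_n :=
  \matrix_(i, j) ((i == j)%:R * (deg adj i)%:R + (adj i j)%:R).

Definition is_q (R : realType) (n : nat) (adj : rel 'I_n) (r : R) : Prop :=
  eigenvalue (signless_laplacian R adj) r /\
  forall a : R, eigenvalue (signless_laplacian R adj) a -> a <= r.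

Definition principal_eigenvector (R : realType) (n : nat) (adj : rel 'I_n)
    (r : R) (X : 'cV[R]_n) : Prop :=
  (forall i, 0 <= X i 0) /\ \sum_i (X i 0) ^+ 2 = 1 /\
  signless_laplacian R adj *m X = r *: X.

Definition mweight (R : realType) (n : nat) (X : 'cV[R]_n) (M : {set {set 'I_n}}) : R :=
  \sum_(e in M) (\sum_(v in e) X v 0) ^+ 2.

Definition extremal_matching (R : realType) (n : nat) (adj : rel 'I_n)
    (X : 'cV[R]_n) (M : {set {set 'I_n}}) : Prop :=
  is_max_matching adj M /\
  forall M', is_max_matching adj M' -> mweight X M' <= mweight X M.

(* (u i, v i), i < k (0-based), is an ordering of M proper to X *)
Definition proper_ordering (R : realType) (n : nat) (X : 'cV[R]_n)
    (M : {set {set 'I_n}}) (k : nat) (u v : 'I_k -> 'I_n) : Prop :=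
  injective (fun i => [set u i; v i]) /\
  [set [set u i; v i] | i : 'I_k] = M /\
  (forall i, X (u i) 0 <= X (v i) 0) /\
  (forall i j : 'I_k, j = i.+1 :> nat -> X (v j) 0 <= X (v i) 0) /\
  (forall i j : 'I_k, j = i.+1 :> nat -> X (v i) 0 = X (v j) 0 ->
      X (u j) 0 <= X (u i) 0).

(* Main.v *)
Require Import Defs.
From mathcomp Require Import all_boot all_order all_algebra.
From mathcomp Require Import reals.
From mathcomp Require classical_sets.
From mathcomp Require Import ring lra zify.
Import Order.TTheory GRing.Theory Num.Theory.
Local Open Scope ring_scope.
Set Implicit Arguments. Unset Strict Implicit. Unset Printing Implicit Defensive.

Section Spec.
Variables (R : realType) (n : nat).
Implicit Types (A B : 'M[R]_n) (y z : 'I_n -> R).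

Definition qf A y := \sum_i \sum_j y i * A i j * y j.
Definition bf A y z := \sum_i \sum_j y i * A i j * z j.
Definition nrm y := \sum_i y i ^+ 2.

Definition symm A := forall i j, A i j = A j i.

Lemma bf_sym A y z : symm A -> bf A y z = bf A z y.
Proof.
move=> sA; rewrite /bf exchange_big; apply: eq_bigr => i _; apply: eq_bigr => j _.
rewrite sA; ring.
Qed.

Lemma qf_bf A y : qf A y = bf A y y. Proof. reflexivity. Qed.

Lemma qf_add A y z t : symm A ->
  qf A (fun i => y i + t * z i) = qf A y + 2 * t * bf A y z + t ^+ 2 * qf A z.
Proof.
move=> sA.
have -> : qf A (fun i => y i + t * z i) =
  qf A y + t * bf A y z + t * bf A z y + t ^+ 2 * qf A z.
  rewrite /qf /bf !mulr_sumr -!big_split /=; apply: eq_bigr => i _.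
  rewrite !mulr_sumr -!big_split /=; apply: eq_bigr => j _; ring.
by rewrite (bf_sym _ _ sA); ring.
Qed.

Lemma nrm_ge0 y : 0 <= nrm y.
Proof. by apply: sumr_ge0 => i _; rewrite sqr_ge0. Qed.

Lemma nrm_eq0 y : nrm y = 0 -> forall i, y i = 0.
Proof.
move=> h i; have := h; rewrite /nrm => /eqP; rewrite psumr_eq0; last by move=> *; rewrite sqr_ge0.
by move/allP/(_ i (mem_index_enum _)); rewrite implyTb sqrf_eq0 => /eqP.
Qed.

Lemma nrm_ge_term y i : y i ^+ 2 <= nrm y.
Proof.
rewrite /nrm (bigD1 i) //= lerDl; apply: sumr_ge0 => j _; exact: sqr_ge0.
Qed.

Lemma CS A y z : symm A -> (forall w, 0 <= qf A w) ->
  bf A y z ^+ 2 <= qf A y * qf A z.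
Proof.
move=> sA psd.
set a := qf A z; set b := bf A y z; set c := qf A y.
have H t : 0 <= c + 2 * t * b + t ^+ 2 * a.
  by have := psd (fun i => y i + t * z i); rewrite qf_add.
have a0 : 0 <= a by exact: psd.
have c0 : 0 <= c by exact: psd.
have [az|an] := eqVneq a 0.
  have [bz|bn] := eqVneq b 0; first by rewrite bz az; lra.
  have := H (- (c + 1) / (2 * b)); rewrite az mulr0 addr0.
  have -> : 2 * (- (c + 1) / (2 * b)) * b = - (c + 1) by field; rewrite bn.
  lra.
have ap : 0 < a by rewrite lt_def an a0.
have := H (- b / a).
have -> : c + 2 * (- b / a) * b + (- b / a) ^+ 2 * a = c - b ^+ 2 / a by field; rewrite an.
rewrite subr_ge0 ler_pdivrMr // => h; rewrite mulrC; exact: h.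
Qed.


Definition av A y i := \sum_j A i j * y j.

Lemma bfE A y z : bf A y z = \sum_i y i * av A z i.
Proof. by apply: eq_bigr => i _; rewrite /av mulr_sumr; apply: eq_bigr => j _; rewrite mulrA. Qed.

Lemma qfE A y : qf A y = \sum_i y i * av A y i.
Proof. exact: bfE. Qed.

Lemma av_scalar_sub (mu : R) A y i : av (mu%:M - A) y i = mu * y i - av A y i.
Proof.
rewrite /av (eq_bigr (fun j => mu *+ (i == j) * y j - A i j * y j)); last first.
  by move=> j _; rewrite !mxE mulrBl.
rewrite sumrB; congr (_ - _).
rewrite (bigD1 i) //= eqxx mulr1n big1 ?addr0 // => j /negbTE; rewrite eq_sym => ->.
by rewrite mulr0n mul0r.
Qed.

Lemma qf_scalar_sub (mu : R) A y : qf (mu%:M - A) y = mu * nrm y - qf A y.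
Proof.
rewrite !qfE /nrm mulr_sumr -sumrB; apply: eq_bigr => i _.
by rewrite av_scalar_sub; ring.
Qed.

Lemma symm_scalar_sub (mu : R) A : symm A -> symm (mu%:M - A).
Proof. by move=> sA i j; rewrite !mxE sA eq_sym. Qed.

Lemma abs_prod_le y i j : `|y i| * `|y j| <= nrm y.
Proof.
have hi : `|y i| ^+ 2 <= nrm y by rewrite real_normK ?num_real //; exact: nrm_ge_term.
have hj : `|y j| ^+ 2 <= nrm y by rewrite real_normK ?num_real //; exact: nrm_ge_term.
have h := sqr_ge0 (`|y i| - `|y j|); rewrite sqrrB in h.
lra.
Qed.

Definition mxabs A := \sum_i \sum_j `|A i j|.

Lemma qf_bound A y : qf A y <= mxabs A * nrm y.
Proof.
rewrite /qf /mxabs mulr_suml; apply: ler_sum => i _; rewrite mulr_suml; apply: ler_sum => j _.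
apply: le_trans (ler_norm _) _; rewrite !normrM (mulrC `|y i|) -mulrA.
by apply: ler_wpM2l => //; exact: abs_prod_le.
Qed.


Lemma mxabs_ge0 A : 0 <= mxabs A.
Proof. by apply: sumr_ge0 => i _; apply: sumr_ge0 => j _. Qed.

Lemma nrm_gt0 y : nrm y != 0 -> 0 < nrm y.
Proof. by move=> h; rewrite lt_def h nrm_ge0. Qed.

Lemma qf0 A y : nrm y = 0 -> qf A y = 0.
Proof.
move=> h; rewrite /qf big1 // => i _; rewrite big1 // => j _.
by rewrite (nrm_eq0 h i) !mul0r.
Qed.

Lemma spec_max A (i0 : 'I_n) : symm A -> exists mu : R,
  (eigenvalue A mu /\ forall a, eigenvalue A a -> a <= mu) /\
  (forall y, qf A y <= mu * nrm y) /\
  (forall y, qf A y = mu * nrm y -> forall i, av A y i = mu * y i).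
Proof.
move=> sA.
pose S : classical_sets.set R := fun r => exists y, nrm y != 0 /\ r = qf A y / nrm y.
pose e0 := fun i : 'I_n => ((i == i0)%:R : R).
have ne0 : nrm e0 = 1.
  rewrite /nrm (bigD1 i0) //= big1 ?addr0; first by rewrite /e0 eqxx expr1n.
  by move=> j /negbTE; rewrite /e0 => ->; rewrite expr0n.
have hS : classical_sets.has_sup S.
  split; first by exists (qf A e0 / nrm e0), e0; rewrite ne0 oner_neq0.
  exists (mxabs A) => r [y [ny ->]].
  by rewrite ler_pdivrMr ?nrm_gt0 //; exact: qf_bound.
pose mu := sup S.
have P1 : forall y, qf A y <= mu * nrm y.
  move=> y; have [ny0|ny] := eqVneq (nrm y) 0; first by rewrite qf0 // ny0 mulr0.
  have : qf A y / nrm y <= mu by apply: sup_upper_bound hS _ _; exists y.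
  by rewrite ler_pdivrMr ?nrm_gt0.
pose B := mu%:M - A.
have sB : symm B := symm_scalar_sub mu sA.
have psdB : forall w, 0 <= qf B w by move=> w; rewrite qf_scalar_sub subr_ge0.
have sing : ~~ (B \in unitmx).
  apply/negP => uB.
  pose Bi := invmx B.
  have key : forall y, nrm y <= mxabs Bi * qf B y.
    move=> y; pose z := av Bi y.
    have Bz : forall i, av B z i = y i.
      move=> i; transitivity (\sum_k (B *m Bi) i k * y k).
        rewrite /av /z /av.
        rewrite (eq_bigr (fun j => \sum_k B i j * Bi j k * y k)); last first.
          by move=> j _; rewrite mulr_sumr; apply: eq_bigr => k _; rewrite mulrA.
        rewrite exchange_big; apply: eq_bigr => k _; rewrite mxE mulr_suml.
        by apply: eq_bigr.
      rewrite mulmxV // (bigD1 i) //= big1 ?addr0; first by rewrite mxE eqxx mul1r.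
      by move=> k; rewrite mxE eq_sym => /negbTE ->; rewrite mul0r.
    have bfyz : bf B y z = nrm y.
      by rewrite bfE; apply: eq_bigr => i _; rewrite Bz expr2.
    have qfz : qf B z = qf Bi y.
      rewrite qfE; under eq_bigr => i _ do rewrite Bz.
      rewrite /qf; apply: eq_bigr => i _; rewrite /z /av mulr_suml.
      by apply: eq_bigr => j _; ring.
    have := CS y z sB psdB; rewrite bfyz qfz => hcs.
    have hb := qf_bound Bi y; have hq := psdB y; have hn := nrm_ge0 y.
    have hc := mxabs_ge0 Bi.
    have [n0|np] := eqVneq (nrm y) 0; first by rewrite n0 mulr_ge0.
    have np' : 0 < nrm y by rewrite nrm_gt0.
    have : nrm y ^+ 2 <= qf B y * (mxabs Bi * nrm y).
      by apply: le_trans hcs _; apply: ler_wpM2l.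
    rewrite expr2 mulrA ler_pM2r // mulrC //.
  have Cpos : 0 < mxabs Bi.
    have := key e0; rewrite ne0; have := mxabs_ge0 Bi.
    rewrite le_eqVlt => /orP [/eqP <-|//]; rewrite mul0r; lra.
  have iCp : 0 < (mxabs Bi)^-1 by rewrite invr_gt0.
  have [r [y [ny ->]] hr] := sup_adherent iCp hS.
  have np : 0 < nrm y by rewrite nrm_gt0.
  rewrite ltr_pdivlMr // in hr.
  have := key y; rewrite qf_scalar_sub.
  have hC : mxabs Bi * (mxabs Bi)^-1 = 1 by rewrite mulfV // gt_eqF.
  move: hr; rewrite -/mu; set C := mxabs Bi; set iC := C^-1; set N := nrm y; set Q := qf A y.
  move=> hr hk.
  have : C * (mu * N - Q) < C * (iC * N).
    by rewrite ltr_pM2l //; lra.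
  rewrite mulrA hC mul1r; lra.
exists mu; split; [split|split] => //.
- move: sing; rewrite unitmxE unitfE negbK => /det0P [v vn0 vB].
  apply/eigenvalueP; exists v => //.
  move: vB; rewrite /B mulmxBr mul_mx_scalar => /eqP; rewrite subr_eq0 => /eqP <-.
  by [].
- move=> a /eigenvalueP [v vA vn0].
  pose y := fun i => v 0 i.
  have qfy : qf A y = a * nrm y.
    rewrite /qf exchange_big /nrm mulr_sumr; apply: eq_bigr => j _.
    rewrite -mulr_suml.
    have -> : \sum_i y i * A i j = (v *m A) 0 j by rewrite mxE; apply: eq_bigr.
    by rewrite vA mxE /y expr2 mulrA.
  have ny : nrm y != 0.
    apply/negP => /eqP h; move/negP: vn0; apply; apply/eqP/rowP => j.
    by rewrite mxE; have -> : 0 = ord0 :> 'I_1 by []; exact: (nrm_eq0 h j).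
  have := P1 y; rewrite qfy ler_pM2r //; exact: nrm_gt0.
- move=> y hy i.
  have qB0 : qf B y = 0 by rewrite qf_scalar_sub hy subrr.
  pose z := av B y.
  have := CS z y sB psdB; rewrite qB0 mulr0.
  have -> : bf B z y = nrm z by rewrite bfE /nrm; apply: eq_bigr => j _; rewrite expr2.
  move=> h; have nz : nrm z = 0.
    by apply/eqP; rewrite -sqrf_eq0 eq_le h sqr_ge0.
  have := nrm_eq0 nz i; rewrite /z av_scalar_sub => /eqP; rewrite subr_eq0 => /eqP ->.
  by [].
Qed.

End Spec.

Section G.
Variables (R : realType) (n : nat).
Implicit Types (adj : rel 'I_n) (y : 'I_n -> R).

Lemma degE adj i : ((deg adj i)%:R : R) = \sum_j ((adj i j)%:R : R).
Proof.
rewrite /deg /nbhd -sum1_card natr_sum big_mkcond /=; apply: eq_bigr => j _.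
by rewrite inE; case: (adj i j).
Qed.

Lemma Qrow adj y i : av (signless_laplacian R adj) y i = \sum_j ((adj i j)%:R : R) * (y i + y j).
Proof.
rewrite /av (eq_bigr (fun j => (i == j)%:R * (deg adj i)%:R * y j + (adj i j)%:R * y j)); last first.
  by move=> j _; rewrite mxE mulrDl.
rewrite big_split /= (bigD1 i) //= big1 ?addr0; last first.
  by move=> j /negbTE; rewrite eq_sym => ->; rewrite !mul0r.
rewrite eqxx mul1r degE mulr_suml -big_split /=; apply: eq_bigr => j _; ring.
Qed.

Lemma Qsym adj : symmetric adj -> symm (signless_laplacian R adj).
Proof.
move=> sa i j; rewrite !mxE sa eq_sym; case: eqVneq => [->|]//.
by rewrite !mul0r.
Qed.

Lemma qfQ adj y : qf (signless_laplacian R adj) y =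
  \sum_i \sum_j ((adj i j)%:R : R) * (y i * (y i + y j)).
Proof.
rewrite qfE; apply: eq_bigr => i _; rewrite Qrow mulr_sumr; apply: eq_bigr => j _; ring.
Qed.

Lemma set2_eq (x y a b : 'I_n) : [set x; y] = [set a; b] ->
  (x = a /\ y = b) \/ (x = b /\ y = a).
Proof.
move=> h.
have hx : x \in [set a; b] by rewrite -h set21.
have hy : y \in [set a; b] by rewrite -h set22.
have ha : a \in [set x; y] by rewrite h set21.
have hb : b \in [set x; y] by rewrite h set22.
move: hx hy ha hb; rewrite !in_set2.
by do 4 case/orP=> /eqP ?; subst; auto.
Qed.

Lemma set2C (x y : 'I_n) : [set x; y] = [set y; x].
Proof. by rewrite finset.setUC. Qed.

Lemma pair_ind (i j c d : 'I_n) : c != d ->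
  (([set i; j] == [set c; d])%:R : R) = ((i == c) && (j == d))%:R + ((i == d) && (j == c))%:R.
Proof.
move=> cd; case: eqP => [/set2_eq [[-> ->]|[-> ->]]|ne].
- by rewrite !eqxx (negbTE cd) /= addr0.
- by rewrite !eqxx eq_sym (negbTE cd) /= add0r.
- have h1 : ((i == c) && (j == d)) = false.
    by apply/negP => /andP[/eqP ic /eqP jd]; apply: ne; rewrite ic jd.
  have h2 : ((i == d) && (j == c)) = false.
    by apply/negP => /andP[/eqP id /eqP jc]; apply: ne; rewrite id jc set2C.
  by rewrite h1 h2 addr0.
Qed.

Lemma pair_sum (i c d : 'I_n) (g : 'I_n -> R) : c != d ->
  \sum_j (([set i; j] == [set c; d])%:R : R) * g j =
  (i == c)%:R * g d + (i == d)%:R * g c.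
Proof.
move=> cd; under eq_bigr => j _ do rewrite pair_ind // mulrDl.
rewrite big_split /=; congr (_ + _).
- rewrite (bigD1 d) //= eqxx andbT big1 ?addr0 // => j /negbTE ->.
  by rewrite andbF mul0r.
- rewrite (bigD1 c) //= eqxx andbT big1 ?addr0 // => j /negbTE ->.
  by rewrite andbF mul0r.
Qed.

Lemma pair_sum2 (c d : 'I_n) (g : 'I_n -> 'I_n -> R) : c != d ->
  \sum_i \sum_j (([set i; j] == [set c; d])%:R : R) * g i j = g c d + g d c.
Proof.
move=> cd; under eq_bigr => i _ do rewrite (@pair_sum i c d (g i)) //.
rewrite big_split /= (bigD1 c) //= eqxx mul1r big1 ?addr0; last first.
  by move=> j /negbTE ->; rewrite mul0r.
rewrite (bigD1 d) //= eqxx mul1r big1 ?addr0 //.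
by move=> j /negbTE ->; rewrite mul0r.
Qed.


Definition swp adj (a b c d : 'I_n) : rel 'I_n := fun x w =>
  (adj x w && ([set x; w] != [set a; b])) || ([set x; w] == [set c; d]).

Section Swap.
Variables (adj : rel 'I_n) (a b c d : 'I_n).
Hypotheses (sa : symmetric adj) (ia : irreflexive adj) (hab : adj a b)
  (hcd : ~~ adj c d) (cd : c != d).

Let G' := swp adj a b c d.

Lemma ab_neq : a != b.
Proof. by apply/eqP => e; move: hab; rewrite e ia. Qed.

Lemma adj_set2 x w : [set x; w] = [set a; b] -> adj x w.
Proof. by case/set2_eq => [[-> ->]|[-> ->]] //; rewrite sa. Qed.

Lemma nadj_set2 x w : [set x; w] = [set c; d] -> ~~ adj x w.
Proof. by case/set2_eq => [[-> ->]|[-> ->]] //; rewrite sa. Qed.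

Lemma swp_sym : symmetric G'.
Proof. by move=> x w; rewrite /G' /swp sa set2C. Qed.

Lemma swp_irr : irreflexive G'.
Proof.
move=> x; rewrite /G' /swp ia /= finset.setUid; apply/negP => /eqP h.
have : c \in [set x] by rewrite h set21.
have : d \in [set x] by rewrite h set22.
rewrite !in_set1 => /eqP e1 /eqP e2; move: cd; by rewrite e1 e2 eqxx.
Qed.

Lemma swpR x w : ((G' x w)%:R : R) =
  (adj x w)%:R - ([set x; w] == [set a; b])%:R + ([set x; w] == [set c; d])%:R.
Proof.
rewrite /G' /swp.
case: eqP => [e1|ne1].
  have ax := adj_set2 e1.
  have -> : ([set x; w] == [set c; d]) = false.
    by apply/negP => /eqP e2; have := nadj_set2 e2; rewrite (adj_set2 e1).
  by rewrite ax /=; ring.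
case: eqP => [e2|ne2].
  by rewrite (negbTE (nadj_set2 e2)) /=; ring.
by case: (adj x w) => /=; ring.
Qed.

Lemma swp_row y : c != a -> c != b ->
  av (signless_laplacian R G') y c = av (signless_laplacian R adj) y c + (y c + y d).
Proof.
move=> ca cb; rewrite !Qrow.
under eq_bigr => j _ do rewrite swpR !mulrDl mulNr.
rewrite !big_split /= sumrN pair_sum ?ab_neq // pair_sum // (negbTE ca) (negbTE cb) eqxx.
rewrite (negbTE cd).
have -> : (false%:R : R) = 0 by []. have -> : (true%:R : R) = 1 by [].
ring.
Qed.

Lemma swp_qf y : qf (signless_laplacian R G') y =
  qf (signless_laplacian R adj) y - (y a + y b) ^+ 2 + (y c + y d) ^+ 2.
Proof.
rewrite !qfQ.
have -> : \sum_i \sum_j ((G' i j)%:R : R) * (y i * (y i + y j)) =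
   \sum_i \sum_j ((adj i j)%:R : R) * (y i * (y i + y j))
 - \sum_i \sum_j (([set i; j] == [set a; b])%:R : R) * (y i * (y i + y j))
 + \sum_i \sum_j (([set i; j] == [set c; d])%:R : R) * (y i * (y i + y j)).
  rewrite -sumrB -big_split /=; apply: eq_bigr => i _.
  rewrite -sumrB -big_split /=; apply: eq_bigr => j _.
  by rewrite swpR; ring.
rewrite (@pair_sum2 a b (fun i j => y i * (y i + y j))) ?ab_neq //.
rewrite (@pair_sum2 c d (fun i j => y i * (y i + y j))) //.
ring.
Qed.

Lemma swp_edges : edges G' = (edges adj :\ [set a; b]) :|: [set [set c; d]].
Proof.
apply/setP => e; rewrite !inE /is_edge; apply/idP/idP.
- case/existsP=> x /existsP [w /andP [sxy /eqP ->]].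
  move: sxy; rewrite /G' /swp => /orP [/andP [axy ne]|/eqP ->]; last by rewrite eqxx orbT.
  rewrite ne /=; apply/orP; left; apply/existsP; exists x; apply/existsP; exists w.
  by rewrite axy eqxx.
- case/orP => [/andP [ne /existsP [x /existsP [w /andP [axy /eqP E]]]] | /eqP ->].
    apply/existsP; exists x; apply/existsP; exists w; rewrite E eqxx andbT /G' /swp.
    by rewrite axy -E ne.
  apply/existsP; exists c; apply/existsP; exists d; rewrite eqxx andbT /G' /swp.
  by rewrite eqxx orbT.
Qed.

Lemma swp_nedges : nedges G' = nedges adj.
Proof.
rewrite /nedges swp_edges finset.setUC cardsU1 (cardsD1 [set a; b] (edges adj)).
have -> : [set a; b] \in edges adj.
  by rewrite inE; apply/existsP; exists a; apply/existsP; exists b; rewrite hab eqxx.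
have -> : [set c; d] \notin edges adj :\ [set a; b].
  rewrite !inE negb_and orbC; apply/orP; left; apply/negP.
  case/existsP=> x /existsP [w /andP [axy /eqP E]].
  by move: (nadj_set2 (esym E)); rewrite axy.
by [].
Qed.

End Swap.

End G.

Section M.
Variables (R : realType) (n : nat).

Definition distinct k (p q : 'I_k -> 'I_n) :=
  injective p /\ injective q /\ forall i j, p i != q j.

Lemma pq_set_inj k (p q : 'I_k -> 'I_n) : distinct p q ->
  injective (fun i => [set p i; q i]).
Proof.
move=> [ip [iq pq]] i j /= /set2_eq [[/ip -> //]|[e _]].
by move: (pq i j); rewrite e eqxx.
Qed.

Lemma fun_matching (G : rel 'I_n) k (p q : 'I_k -> 'I_n) :
  (forall i, G (p i) (q i)) -> distinct p q ->
  is_matching G [set [set p i; q i] | i : 'I_k] /\ #|[set [set p i; q i] | i : 'I_k]| = k.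
Proof.
move=> hG dpq; have inj := pq_set_inj dpq.
case: dpq => [ip [iq pq]].
split; last by rewrite card_imset // card_ord.
apply/andP; split.
  apply/subsetP => e /imsetP [i _ ->]; rewrite inE.
  by apply/existsP; exists (p i); apply/existsP; exists (q i); rewrite hG eqxx.
apply/forallP => e1; apply/implyP => /imsetP [i _ ->].
apply/forallP => e2; apply/implyP => /imsetP [j _ ->].
apply/implyP => ne.
have nij : i != j by apply: contraNneq ne => ->.
rewrite -setI_eq0; apply/eqP/setP => x; rewrite !inE.
apply/negP => /andP [/orP [/eqP ->|/eqP ->] /orP [/eqP e|/eqP e]].
- by move: nij; rewrite (ip _ _ e) eqxx.
- by move: (pq i j); rewrite e eqxx.
- by move: (pq j i); rewrite e eqxx.
- by move: nij; rewrite (iq _ _ e) eqxx.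
Qed.

Lemma mn_ge (G : rel 'I_n) M : is_matching G M -> (#|M| <= matching_number G)%N.
Proof. move=> h; rewrite /matching_number. by rewrite (bigD1 M) //= leq_maxl. Qed.

Lemma sum_set2 (X : 'cV[R]_n) (a b : 'I_n) : a != b ->
  \sum_(v in [set a; b]) X v 0 = X a 0 + X b 0.
Proof.
by move=> ab; rewrite big_setU1 /= ?inE // big_set1.
Qed.

Lemma mweight_fun (X : 'cV[R]_n) k (p q : 'I_k -> 'I_n) : distinct p q ->
  mweight X [set [set p i; q i] | i : 'I_k] = \sum_i (X (p i) 0 + X (q i) 0) ^+ 2.
Proof.
move=> dpq; have inj := pq_set_inj dpq.
rewrite /mweight big_imset /=; last by move=> i j _ _; exact: inj.
apply: eq_bigr => i _; rewrite sum_set2 //.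
by case: dpq => [_ [_ pq]]; exact: pq.
Qed.

End M.

Section Main.
Variables (R : realType) (m beta n : nat) (adj : rel 'I_n) (qs : R) (X : 'cV[R]_n)
  (Ms : {set {set 'I_n}}) (u v : 'I_(matching_number adj) -> 'I_n).
Hypotheses (hbm : (beta <= m)%N) (hsimple : simple_graph adj) (hm : nedges adj = m)
  (hbk : (beta <= matching_number adj)%N) (hq : is_q adj qs)
  (hmax : forall (n' : nat) (adj' : rel 'I_n') (r : R),
      simple_graph adj' -> nedges adj' = m -> (beta <= matching_number adj')%N ->
      is_q adj' r -> r <= qs)
  (hX : principal_eigenvector adj qs X) (hM : extremal_matching adj X Ms)
  (hP : proper_ordering X Ms u v).

Local Notation k := (matching_number adj).
Let Q := signless_laplacian R adj.
Let xf := fun w => X w 0.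

Lemma sym_adj : symmetric adj. Proof. by case: hsimple. Qed.
Lemma irr_adj : irreflexive adj. Proof. by case: hsimple. Qed.

Lemma x_ge0 w : 0 <= X w 0. Proof. by case: hX => h _; exact: h. Qed.

Lemma x_nrm : nrm xf = 1. Proof. by case: hX => _ [h _]. Qed.

Lemma x_eig i : av Q xf i = qs * X i 0.
Proof.
case: hX => _ [_ /matrixP /(_ i 0)]; rewrite !mxE => <-.
by apply: eq_bigr => j _; rewrite mxE.
Qed.

Lemma x_qf : qf Q xf = qs.
Proof.
rewrite qfE (eq_bigr (fun i => qs * xf i ^+ 2)); last first.
  by move=> i _; rewrite x_eig /xf; ring.
by rewrite -mulr_sumr -/(nrm xf) x_nrm mulr1.
Qed.

Lemma rot (a b c d : 'I_n) (p q : 'I_k -> 'I_n) :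
  adj a b -> ~~ adj c d -> c != d -> c != a -> c != b ->
  (forall i, swp adj a b c d (p i) (q i)) -> distinct p q ->
  0 < X c 0 + X d 0 -> X c 0 + X d 0 < X a 0 + X b 0.
Proof.
move=> hab hcd cd ca cb hpq dpq pos.
have sa := sym_adj; have ia := irr_adj.
pose G' := swp adj a b c d.
have sG' : simple_graph G' by split; [exact: (swp_sym a b c d sa) | exact: (swp_irr a b ia cd)].
have nG' : nedges G' = m by rewrite swp_nedges.
have [mG' cG'] := fun_matching hpq dpq.
have bG' : (beta <= matching_number G')%N.
  by apply: leq_trans hbk _; rewrite -[X in (X <= _)%N]cG'; exact: mn_ge.
have [mu [qmu [rq eqc]]] := spec_max a (Qsym R (swp_sym a b c d sa)).
have mule : mu <= qs by apply: (hmax sG' nG' bG'); exact: qmu.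
have hqf := swp_qf sa ia hab hcd cd xf.
rewrite -/Q x_qf in hqf.
have := rq xf; rewrite x_nrm mulr1 hqf => hle.
have a0 := x_ge0 a; have b0 := x_ge0 b; have c0 := x_ge0 c; have d0 := x_ge0 d.
rewrite /xf /= in hle hqf.
have [eq2|ne2] := eqVneq ((X c 0 + X d 0) ^+ 2) ((X a 0 + X b 0) ^+ 2).
  exfalso.
  rewrite eq2 in hle hqf.
  have muq : mu = qs by apply/eqP; rewrite eq_le mule /=; lra.
  have e1 : qf (signless_laplacian R G') xf = mu * nrm xf.
    by rewrite x_nrm mulr1 hqf muq; ring.
  have := eqc xf e1 c; rewrite (swp_row sa ia hab hcd cd xf ca cb) -/Q x_eig muq.
  rewrite /xf /= => h; lra.
have lt2 : (X c 0 + X d 0) ^+ 2 < (X a 0 + X b 0) ^+ 2.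
  rewrite lt_def eq_sym ne2 /=; lra.
nra.
Qed.


Lemma Ms_img : Ms = [set [set u i; v i] | i : 'I_k].
Proof. by case: hP => _ [<- _]. Qed.

Lemma uv_in i : [set u i; v i] \in Ms.
Proof. by rewrite Ms_img; apply/imsetP; exists i. Qed.

Lemma uv_adj i : adj (u i) (v i).
Proof.
case: hM => /andP [/andP [/subsetP sub _] _] _.
have := sub [set u i; v i] (uv_in i).
rewrite inE => /existsP [a /existsP [b /andP [hab /eqP /set2_eq]]].
by case=> [[-> ->]|[-> ->]] //; rewrite sym_adj.
Qed.

Lemma uv_disj i j w : i != j -> w \in [set u i; v i] -> w \in [set u j; v j] -> False.
Proof.
move=> ij wi wj.
case: hM => /andP [/andP [_ /forallP dis] _] _.
have inj : [set u i; v i] != [set u j; v j].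
  by apply: contra ij => /eqP e; apply/eqP; case: hP => hi _; exact: hi.
have := dis [set u i; v i]; rewrite uv_in /= => /forallP /(_ [set u j; v j]).
rewrite uv_in inj /= => hd.
by move: (disjointFr hd wi); rewrite wj.
Qed.

Lemma uv_dist : distinct u v.
Proof.
split; [|split].
- move=> i j e; apply/eqP; apply/negP => /negP ij.
  by apply: (uv_disj ij (w := u i)); rewrite ?set21 // e set21.
- move=> i j e; apply/eqP; apply/negP => /negP ij.
  by apply: (uv_disj ij (w := v i)); rewrite ?set22 // e set22.
- move=> i j; case: (eqVneq i j) => [->|ij].
    by apply/eqP => e; have := uv_adj j; rewrite e irr_adj.
  by apply/eqP => e; apply: (uv_disj ij (w := u i)); rewrite ?set21 // e set22.
Qed.

Lemma xuv (i : 'I_k) : X (u i) 0 <= X (v i) 0.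
Proof. by case: hP => _ [_ [h _]]. Qed.

Lemma xv_mono (i j : 'I_k) : (i <= j)%N -> X (v j) 0 <= X (v i) 0.
Proof.
move=> /subnKC; move: (j - i)%N => dd; elim: dd j => [|dd IH] j hj.
  by have -> : j = i by apply: ord_inj; rewrite -hj addn0.
have jd : (i + dd < k)%N by have := ltn_ord j; lia.
pose j' := Ordinal jd.
apply: le_trans (IH j' erefl).
by case: hP => _ [_ [_ [h _]]]; apply: h; rewrite /= -hj addnS.
Qed.


Lemma x_zero w y : X w 0 = 0 -> adj w y -> X y 0 = 0.
Proof.
move=> w0 wy; have := x_eig w; rewrite Qrow /xf /= w0 mulr0 => h.
have hnn : forall j, true -> 0 <= ((adj w j)%:R : R) * (0 + X j 0).
  by move=> j _; apply: mulr_ge0; rewrite ?ler0n // add0r x_ge0.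
have H := psumr_eq0P hnn h.
by have := @H y isT; rewrite wy mul1r add0r.
Qed.

Lemma match_cases w : (exists i, w = u i \/ w = v i) \/ (forall i, w != u i /\ w != v i).
Proof.
case: (boolP [exists i, (w == u i) || (w == v i)]).
  by move=> /existsP [i /orP [/eqP ->|/eqP ->]]; left; exists i; [left|right].
move=> /existsPn hn; right => i; have := hn i; rewrite negb_or => /andP [h1 h2].
by split.
Qed.

Lemma set_uv_neq (i j : 'I_k) : i != j -> [set u i; v i] != [set u j; v j].
Proof. by move=> ij; apply: contra ij => /eqP e; apply/eqP; case: hP => hi _; exact: hi. Qed.

Lemma X3 z : (forall i, z != u i /\ z != v i) -> forall i, X z 0 <= X (u i) 0.
Proof.
move=> hz i; rewrite leNgt; apply/negP => hlt.
have [iu [iv uvn]] := uv_dist.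
pose p := fun j => if j == i then z else u j.
have dp : distinct p v.
  split; [|split] => //.
  - move=> j1 j2; rewrite /p; case: (eqVneq j1 i) => [->|n1]; case: (eqVneq j2 i) => [->|n2] //.
    + by move=> e; move: (hz j2).1; rewrite e eqxx.
    + by move=> e; move: (hz j1).1; rewrite e eqxx.
    + exact: iu.
  - by move=> j j'; rewrite /p; case: (eqVneq j i) => _ /=; [exact: (hz j').2 | exact: uvn].
have hv0 := x_ge0 (v i); have hu0 := x_ge0 (u i).
case: (boolP (adj z (v i))) => hzv.
  have hpv : forall j, adj (p j) (v j).
    by move=> j; rewrite /p; case: eqVneq => [->|_] //; exact: uv_adj.
  have [mM' cM'] := fun_matching hpv dp.
  have mx : is_max_matching adj [set [set p j; v j] | j : 'I_k].
    by rewrite /is_max_matching mM' cM' eqxx.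
  case: hM => _ /(_ _ mx); rewrite Ms_img !mweight_fun //.
  rewrite (bigD1 i) //= [in X in _ <= X](bigD1 i) //=.
  have -> : \sum_(j | j != i) (X (p j) 0 + X (v j) 0) ^+ 2 =
            \sum_(j | j != i) (X (u j) 0 + X (v j) 0) ^+ 2.
    by apply: eq_bigr => j /negbTE; rewrite /p => ->.
  rewrite /p eqxx => h; nra.
have pos : 0 < X z 0 + X (v i) 0 by lra.
have hsw : forall j, swp adj (u i) (v i) z (v i) (p j) (v j).
  move=> j; rewrite /swp /p; case: (eqVneq j i) => [->|ji]; first by rewrite eqxx orbT.
  by rewrite uv_adj set_uv_neq.
have := rot (uv_adj i) hzv (hz i).2 (hz i).1 (hz i).2 hsw dp pos.
lra.
Qed.

Ltac fin hab hE h12 k2 := first [ by rewrite irr_adj in hab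
  | by move: (hE k2); rewrite eqxx
  | by move: (hE k2); rewrite set2C eqxx
  | by rewrite hab in h12
  | by rewrite sym_adj hab in h12
  | lra ].

Lemma set2_neq (x y a b : 'I_n) : x != a -> x != b -> [set x; y] != [set a; b].
Proof.
move=> xa xb; apply/eqP => e; have : x \in [set a; b] by rewrite -e set21.
by rewrite in_set2 (negbTE xa) (negbTE xb).
Qed.

Section Final.
Variables (k1 k2 : 'I_k).
Hypotheses (hk1 : val k1 = 0%N) (hk2 : val k2 = 1%N).

Local Notation u1 := (u k1).
Local Notation v1 := (v k1).
Local Notation u2 := (u k2).
Local Notation v2 := (v k2).

Lemma k12 : k1 != k2.
Proof. by apply/eqP => e; move: hk2; rewrite -e hk1. Qed.

Lemma x_v21 : X v2 0 <= X v1 0.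
Proof. by apply: xv_mono; rewrite hk1. Qed.

Lemma x_max w : X w 0 <= X v1 0.
Proof.
case: (match_cases w) => [[i [->|->]]|hw].
- by apply: le_trans (xuv i) _; apply: xv_mono; rewrite hk1.
- by apply: xv_mono; rewrite hk1.
- by apply: le_trans (X3 hw k1) _; exact: xuv.
Qed.

Lemma x_v1_pos : 0 < X v1 0.
Proof.
rewrite lt_def x_ge0 andbT; apply/negP => /eqP h0.
have := x_nrm; rewrite /nrm big1 => [|w _]; first by move=> /eqP; rewrite eq_sym oner_eq0.
have := x_max w; rewrite h0 => hle.
have -> : xf w = 0 by apply/eqP; rewrite eq_le hle x_ge0.
by rewrite expr0n.
Qed.

Lemma x_u1_pos : 0 < X u1 0.
Proof.
rewrite lt_def x_ge0 andbT; apply/negP => /eqP h0.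
have := x_zero h0 (uv_adj k1); have := x_v1_pos; lra.
Qed.

Lemma cls3 (k3 : 'I_k) : val k3 = 2%N -> forall w, w != v1 ->
  w = u1 \/ w = v2 \/ w = u2 \/ X w 0 <= X (v k3) 0.
Proof.
move=> hk3 w wv1.
case: (match_cases w) => [[i hi]|hw]; last first.
  by right; right; right; apply: le_trans (X3 hw k3) _; exact: xuv.
case: (eqVneq i k1) => [e1|n1].
  by subst i; case: hi => hw; subst w; [left|rewrite eqxx in wv1].
case: (eqVneq i k2) => [e2|n2].
  by subst i; case: hi => hw; subst w; [right; right; left|right; left].
have h2 : (val k3 <= val i)%N.
  rewrite hk3; have : val i != 0%N by apply: contra n1 => /eqP e; apply/eqP/ord_inj; rewrite e hk1.
  have : val i != 1%N by apply: contra n2 => /eqP e; apply/eqP/ord_inj; rewrite e hk2.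
  lia.
right; right; right; case: hi => ->; last exact: xv_mono.
by apply: le_trans (xuv i) _; exact: xv_mono.
Qed.

Lemma cls2 : ~~ (2 < k)%N -> forall w, w != v1 ->
  w = u1 \/ w = v2 \/ w = u2 \/ (X w 0 <= X u1 0 /\ X w 0 <= X u2 0).
Proof.
move=> hk w wv1.
case: (match_cases w) => [[i hi]|hw]; last by right; right; right; split; exact: X3.
case: (eqVneq i k1) => [e1|n1].
  by subst i; case: hi => hw; subst w; [left|rewrite eqxx in wv1].
case: (eqVneq i k2) => [e2|n2].
  by subst i; case: hi => hw; subst w; [right; right; left|right; left].
exfalso.
have : (i : nat) != 0%N by apply: contra n1 => /eqP e; apply/eqP/ord_inj; rewrite e hk1.
have : (i : nat) != 1%N by apply: contra n2 => /eqP e; apply/eqP/ord_inj; rewrite e hk2.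
have := ltn_ord i; move: hk; rewrite -leqNgt; lia.
Qed.

Lemma B2 w : w != v1 -> w != u1 -> X w 0 <= X v2 0.
Proof.
move=> w1 wu1; have h22 := xuv k2.
case: (boolP (2 < k)%N) => hk.
  pose k3 := Ordinal hk.
  have h32 : X (v k3) 0 <= X v2 0 by apply: xv_mono; rewrite hk2.
  by case: (cls3 (k3 := k3) erefl w1) => [e|[->|[->|h]]]; [rewrite e eqxx in wu1|lra|lra|lra].
by case: (cls2 hk w1) => [e|[->|[->|[h h']]]]; [rewrite e eqxx in wu1|lra|lra|lra].
Qed.

Definition swk (j : 'I_k) := if j == k1 then k2 else if j == k2 then k1 else j.

Lemma swk1 : swk k1 = k2. Proof. by rewrite /swk eqxx. Qed.
Lemma swk2 : swk k2 = k1. Proof. by rewrite /swk eq_sym (negbTE k12) eqxx. Qed.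
Lemma swk_other j : j != k1 -> j != k2 -> swk j = j.
Proof. by rewrite /swk => /negbTE -> /negbTE ->. Qed.

Lemma swkK : involutive swk.
Proof.
move=> j; case: (eqVneq j k1) => [->|j1]; first by rewrite swk1 swk2.
case: (eqVneq j k2) => [->|j2]; first by rewrite swk2 swk1.
by rewrite !swk_other.
Qed.

Lemma swk_inj : injective swk. Proof. exact: inv_inj swkK. Qed.

Lemma dist_sw : distinct u (fun j => v (swk j)).
Proof.
have [iu [iv uvn]] := uv_dist.
split; [exact: iu|split]; last by move=> i j; exact: uvn.
by move=> i j /iv /swk_inj.
Qed.



Lemma B_hk3 (a b : 'I_n) : adj a b -> a != v1 -> b != v1 ->
  (forall i, [set a; b] != [set u i; v i]) -> ~~ adj u1 v2 ->
  X u1 0 + X v2 0 < X a 0 + X b 0 -> X u1 0 < X u2 0 -> (2 < k)%N.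
Proof.
move=> hab ha1 hb1 hE h12 R1 RB; case: (boolP (2 < k)%N) => // hk; exfalso.
have xa := x_max a; have xb := x_max b; have hu2 := xuv k2.
have c2 := cls2 hk.
case: (c2 a ha1) => [ea|[ea|[ea|[ha3 ha4]]]]; case: (c2 b hb1) => [eb|[eb|[eb|[hb3 hb4]]]];
  subst; fin hab hE h12 k2.
Qed.

Lemma B_s13 (a b : 'I_n) (k3 : 'I_k) : adj a b -> a != v1 -> b != v1 ->
  (forall i, [set a; b] != [set u i; v i]) -> ~~ adj u1 v2 ->
  X u1 0 + X v2 0 < X a 0 + X b 0 -> val k3 = 2%N -> X u1 0 < X u2 0 ->
  X v1 0 + X (v k3) 0 < X a 0 + X b 0 -> False.
Proof.
move=> hab ha1 hb1 hE h12 R1 hv3 RB h.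
have xa := x_max a; have xb := x_max b; have hu2 := xuv k2; have h21 := x_v21.
have h32 : X (v k3) 0 <= X v2 0 by apply: xv_mono; rewrite hk2 hv3.
have hu1 := xuv k1.
have c3 := cls3 hv3.
case: (c3 a ha1) => [ea|[ea|[ea|ha3]]]; case: (c3 b hb1) => [eb|[eb|[eb|hb3]]];
  subst; fin hab hE h12 k2.
Qed.

Lemma B_s23 (a b : 'I_n) (k3 : 'I_k) : adj a b -> a != v1 -> b != v1 ->
  (forall i, [set a; b] != [set u i; v i]) -> ~~ adj u1 v2 ->
  X u1 0 + X v2 0 < X a 0 + X b 0 -> val k3 = 2%N -> X u1 0 < X u2 0 ->
  X v2 0 + X (v k3) 0 < X a 0 + X b 0 -> False.
Proof.
move=> hab ha1 hb1 hE h12 R1 hv3 RB h.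
have xa := x_max a; have xb := x_max b; have hu2 := xuv k2; have h21 := x_v21.
have h32 : X (v k3) 0 <= X v2 0 by apply: xv_mono; rewrite hk2 hv3.
have hu1 := xuv k1.
have c3 := cls3 hv3.
case: (c3 a ha1) => [ea|[ea|[ea|ha3]]]; case: (c3 b hb1) => [eb|[eb|[eb|hb3]]];
  subst; fin hab hE h12 k2.
Qed.

Lemma A_hk3 (a b : 'I_n) : adj a b -> a != v1 -> b != v1 ->
  (forall i, [set a; b] != [set u i; v i]) -> ~~ adj u1 v2 ->
  X u1 0 + X v2 0 < X a 0 + X b 0 -> X v1 0 + X u2 0 < X a 0 + X b 0 -> (2 < k)%N.
Proof.
move=> hab ha1 hb1 hE h12 R1 RA; case: (boolP (2 < k)%N) => // hk; exfalso.
have xa := x_max a; have xb := x_max b; have hu2 := xuv k2.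
have c2 := cls2 hk.
case: (c2 a ha1) => [ea|[ea|[ea|[ha3 ha4]]]]; case: (c2 b hb1) => [eb|[eb|[eb|[hb3 hb4]]]];
  subst; fin hab hE h12 k2.
Qed.

Lemma A_s13 (a b : 'I_n) (k3 : 'I_k) : adj a b -> a != v1 -> b != v1 ->
  (forall i, [set a; b] != [set u i; v i]) -> ~~ adj u1 v2 ->
  X u1 0 + X v2 0 < X a 0 + X b 0 -> val k3 = 2%N -> X v1 0 + X u2 0 < X a 0 + X b 0 ->
  X v1 0 + X (v k3) 0 < X a 0 + X b 0 -> False.
Proof.
move=> hab ha1 hb1 hE h12 R1 hv3 RA h.
have xa := x_max a; have xb := x_max b; have hu2 := xuv k2; have h21 := x_v21.
have h32 : X (v k3) 0 <= X v2 0 by apply: xv_mono; rewrite hk2 hv3.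
have hu1 := xuv k1.
have c3 := cls3 hv3.
case: (c3 a ha1) => [ea|[ea|[ea|ha3]]]; case: (c3 b hb1) => [eb|[eb|[eb|hb3]]];
  subst; fin hab hE h12 k2.
Qed.

Lemma A_s23 (a b : 'I_n) (k3 : 'I_k) : adj a b -> a != v1 -> b != v1 ->
  (forall i, [set a; b] != [set u i; v i]) -> ~~ adj u1 v2 ->
  X u1 0 + X v2 0 < X a 0 + X b 0 -> val k3 = 2%N -> X v1 0 + X u2 0 < X a 0 + X b 0 ->
  X v2 0 + X (v k3) 0 < X a 0 + X b 0 -> False.
Proof.
move=> hab ha1 hb1 hE h12 R1 hv3 RA h.
have xa := x_max a; have xb := x_max b; have hu2 := xuv k2; have h21 := x_v21.
have h32 : X (v k3) 0 <= X v2 0 by apply: xv_mono; rewrite hk2 hv3.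
have hu1 := xuv k1.
have c3 := cls3 hv3.
case: (c3 a ha1) => [ea|[ea|[ea|ha3]]]; case: (c3 b hb1) => [eb|[eb|[eb|hb3]]];
  subst; fin hab hE h12 k2.
Qed.


Lemma main_goal :
  let E1 := Ms :|: [set [set v1; w] | w in nbhd adj v1] in
  let E2 := edges adj :\: E1 in
  E2 != set0 ->
  (adj u1 v2 && adj u2 v1 && adj v1 v2)
  \/ (exists k3 : 'I_k, val k3 = 2%N /\
        adj v1 v2 && adj v2 (v k3) && adj v1 (v k3)).
Proof.
move=> E1 E2 hE2.
have [a [b [hab [ha1 [hb1 hE]]]]] : exists a b, adj a b /\ a != v1 /\ b != v1 /\
    forall i, [set a; b] != [set u i; v i].
  case/set0Pn: hE2 => e; rewrite /E2 /E1 !inE negb_or => /andP [/andP [eM eN] eE].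
  move: eE => /existsP [a /existsP [b /andP [hab /eqP ee]]]; subst e.
  exists a, b; split => //; split; [|split].
  - apply: contraNneq eN => ea; subst a; apply/imsetP; exists b; [by rewrite inE | by []].
  - apply: contraNneq eN => eb; subst b; apply/imsetP; exists a; [by rewrite inE sym_adj | by rewrite set2C].
  - by move=> i; apply: contraNneq eM => ->; exact: uv_in.
have hab' : adj b a by rewrite sym_adj.
have [iu [iv uvn]] := uv_dist.
have n12 := k12.
have v12 : v1 != v2 by apply: contra n12 => /eqP /iv ->.
have u12 : u1 != u2 by apply: contra n12 => /eqP /iu ->.
have u1v2 : u1 != v2 := uvn k1 k2.
have u2v1 : u2 != v1 := uvn k2 k1.
have a1 : v1 != a by rewrite eq_sym.
have b1 : v1 != b by rewrite eq_sym.
have rot_ab : forall c d, ~~ adj c d -> c != d -> c != a -> c != b ->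
    0 < X c 0 + X d 0 -> X c 0 + X d 0 < X a 0 + X b 0.
  move=> c d ncd cd ca cb pos; apply: (rot hab ncd cd ca cb _ uv_dist pos).
  by move=> i; rewrite /swp uv_adj /= eq_sym (hE i).
have xa := x_max a; have xb := x_max b.
have pv1 := x_v1_pos; have pu1 := x_u1_pos; have h21 := x_v21.
have hu1 := xuv k1; have hu2 := xuv k2.
have a0 := x_ge0 a; have b0 := x_ge0 b; have u20 := x_ge0 u2; have v20 := x_ge0 v2.
have s1 : adj v1 v2.
  case: (boolP (adj v1 v2)) => // nv12; exfalso.
  have h := rot_ab v1 v2 nv12 v12 a1 b1 ltac:(lra).
  have Ba := @B2 a ha1; have Bb := @B2 b hb1.
  case: (eqVneq a u1) => [ea|na]; case: (eqVneq b u1) => [eb|nb].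
  - by move: hab; rewrite ea eb irr_adj.
  - have := Bb nb; lra.
  - have := Ba na; lra.
  - have := Ba na; lra.
case: (boolP (adj u1 v2)) => h12.
  left; rewrite s1 andbT /=.
  case: (boolP (adj u2 v1)) => // h21'; exfalso.
  have hsw : forall j, swp adj u2 v2 v1 u2 (u j) (v (swk j)).
    move=> j; rewrite /swp.
    case: (eqVneq j k1) => [->|j1]; first by rewrite swk1 h12 /= set2_neq.
    case: (eqVneq j k2) => [->|j2]; first by rewrite swk2 set2C eqxx orbT.
    by rewrite swk_other // uv_adj set_uv_neq.
  have n1 : ~~ adj v1 u2 by rewrite sym_adj.
  have e1 : v1 != u2 by rewrite eq_sym.
  have := rot (uv_adj k2) n1 e1 e1 v12 hsw dist_sw.
  have pp : 0 < X v1 0 + X u2 0 by lra.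
  move=> /(_ pp); lra.
right.
have R1 : X u1 0 + X v2 0 < X a 0 + X b 0.
  have p12 : 0 < X u1 0 + X v2 0 by lra.
  case: (eqVneq a u1) => [ea|na].
    subst a.
    have bv2 : v2 != b by apply: contraNneq h12 => ->.
    have n1 : ~~ adj v2 u1 by rewrite sym_adj.
    have e1 : v2 != u1 by rewrite eq_sym.
    have := rot_ab v2 u1 n1 e1 e1 bv2; lra.
  case: (eqVneq b u1) => [eb|nb].
    subst b.
    have av2 : v2 != a by apply: contraNneq h12 => ->.
    have n1 : ~~ adj v2 u1 by rewrite sym_adj.
    have e1 : v2 != u1 by rewrite eq_sym.
    have := rot_ab v2 u1 n1 e1 av2 e1; lra.
  have e1 : u1 != a by rewrite eq_sym.
  have e2 : u1 != b by rewrite eq_sym.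
  exact: rot_ab h12 u1v2 e1 e2 p12.
case: (boolP (adj v1 u2)) => hB.
-
  have RB : X u1 0 < X u2 0.
    have hsw : forall j, swp adj u2 v2 u1 v2 (u j) (v (swk j)).
      move=> j; rewrite /swp.
      case: (eqVneq j k1) => [->|j1]; first by rewrite swk1 eqxx orbT.
      case: (eqVneq j k2) => [->|j2].
        by rewrite swk2 sym_adj hB /= set2C set2_neq // eq_sym.
      by rewrite swk_other // uv_adj set_uv_neq.
    have pp : 0 < X u1 0 + X v2 0 by lra.
    have := rot (uv_adj k2) h12 u1v2 u12 u1v2 hsw dist_sw pp; lra.
  have hk3 : (2 < k)%N by apply: (B_hk3 hab ha1 hb1 hE h12 R1 RB).
  pose k3 := Ordinal hk3.
  have hv3 : val k3 = 2%N by [].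
  have h32 : X (v k3) 0 <= X v2 0 by apply: xv_mono; rewrite hk2.
  have v13 : v1 != v k3 by apply/eqP => /iv /(congr1 val); rewrite hk1.
  have v23 : v2 != v k3 by apply/eqP => /iv /(congr1 val); rewrite hk2.
  have v30 := x_ge0 (v k3).
  have c3 := cls3 hv3.
  have get23 : ~~ adj v2 (v k3) -> 0 < X v2 0 + X (v k3) 0 ->
      X v2 0 + X (v k3) 0 < X a 0 + X b 0.
    move=> n23 pos.
    have n32 : ~~ adj (v k3) v2 by rewrite sym_adj.
    have v32 : v k3 != v2 by rewrite eq_sym.
    have pos' : 0 < X (v k3) 0 + X v2 0 by lra.
    case: (eqVneq a v2) => [ea|na].
      have bv3 : v k3 != b by apply: contraNneq n23 => ->; rewrite -ea.
      have av3 : v k3 != a by rewrite ea.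
      have := rot_ab (v k3) v2 n32 v32 av3 bv3 pos'; lra.
    case: (eqVneq b v2) => [eb|nb].
      have av3 : v k3 != a by apply: contraNneq n23 => ->; rewrite -eb.
      have bv3 : v k3 != b by rewrite eb.
      have := rot_ab (v k3) v2 n32 v32 av3 bv3 pos'; lra.
    by apply: rot_ab n23 v23 _ _ pos; rewrite eq_sym.
  exists k3; split => //; rewrite s1 /=.
  have s13 : adj v1 (v k3).
    case: (boolP (adj v1 (v k3))) => // n13; exfalso.
    have := rot_ab v1 (v k3) n13 v13 a1 b1 ltac:(lra) => h.
    exact: (B_s13 hab ha1 hb1 hE h12 R1 hv3 RB h).
  have s23 : adj v2 (v k3).
    case: (boolP (adj v2 (v k3))) => // n23; exfalso.
    have := get23 n23 ltac:(lra) => h.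
    exact: (B_s23 hab ha1 hb1 hE h12 R1 hv3 RB h).
  by rewrite s13 s23.
-
  have v1u2 : v1 != u2 by rewrite eq_sym.
  have RA := rot_ab v1 u2 hB v1u2 a1 b1 ltac:(lra).
  have hk3 : (2 < k)%N by apply: (A_hk3 hab ha1 hb1 hE h12 R1 RA).
  pose k3 := Ordinal hk3.
  have hv3 : val k3 = 2%N by [].
  have h32 : X (v k3) 0 <= X v2 0 by apply: xv_mono; rewrite hk2.
  have v13 : v1 != v k3 by apply/eqP => /iv /(congr1 val); rewrite hk1.
  have v23 : v2 != v k3 by apply/eqP => /iv /(congr1 val); rewrite hk2.
  have v30 := x_ge0 (v k3).
  have c3 := cls3 hv3.
  have get23 : ~~ adj v2 (v k3) -> 0 < X v2 0 + X (v k3) 0 ->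
      X v2 0 + X (v k3) 0 < X a 0 + X b 0.
    move=> n23 pos.
    have n32 : ~~ adj (v k3) v2 by rewrite sym_adj.
    have v32 : v k3 != v2 by rewrite eq_sym.
    have pos' : 0 < X (v k3) 0 + X v2 0 by lra.
    case: (eqVneq a v2) => [ea|na].
      have bv3 : v k3 != b by apply: contraNneq n23 => ->; rewrite -ea.
      have av3 : v k3 != a by rewrite ea.
      have := rot_ab (v k3) v2 n32 v32 av3 bv3 pos'; lra.
    case: (eqVneq b v2) => [eb|nb].
      have av3 : v k3 != a by apply: contraNneq n23 => ->; rewrite -eb.
      have bv3 : v k3 != b by rewrite eb.
      have := rot_ab (v k3) v2 n32 v32 av3 bv3 pos'; lra.
    by apply: rot_ab n23 v23 _ _ pos; rewrite eq_sym.
  exists k3; split => //; rewrite s1 /=.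
  have s13 : adj v1 (v k3).
    case: (boolP (adj v1 (v k3))) => // n13; exfalso.
    have := rot_ab v1 (v k3) n13 v13 a1 b1 ltac:(lra) => h.
    exact: (A_s13 hab ha1 hb1 hE h12 R1 hv3 RA h).
  have pv2 : 0 < X v2 0.
    rewrite lt_def x_ge0 andbT; apply/negP => /eqP h0.
    have := x_zero h0 (etrans (sym_adj _ _) s1); lra.
  have s23 : adj v2 (v k3).
    case: (boolP (adj v2 (v k3))) => // n23; exfalso.
    have := get23 n23 ltac:(lra) => h.
    exact: (A_s23 hab ha1 hb1 hE h12 R1 hv3 RA h).
  by rewrite s13 s23.
Qed.

End Final.

End Main.

Theorem lemma2p4 (R : realType) (m beta : nat) (n : nat) (adj : rel 'I_n)
    (qs : R) (X : 'cV[R]_n) (Ms : {set {set 'I_n}})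
    (u v : 'I_(matching_number adj) -> 'I_n) :
  (1 <= beta)%N -> (beta <= m)%N ->
  (* G* lies in G_{m, >= beta} *)
  simple_graph adj -> nedges adj = m -> (beta <= matching_number adj)%N ->
  (* q(G* ) = qs *)
  is_q adj qs ->
  (* G* has maximum q over G_{m, >= beta} *)
  (forall (n' : nat) (adj' : rel 'I_n') (r : R),
      simple_graph adj' -> nedges adj' = m -> (beta <= matching_number adj')%N ->
      is_q adj' r -> r <= qs) ->
  principal_eigenvector adj qs X ->
  extremal_matching adj X Ms ->
  proper_ordering X Ms u v ->
  forall (k1 k2 : 'I_(matching_number adj)), val k1 = 0%N -> val k2 = 1%N ->
  let E1 := Ms :|: [set [set v k1; w] | w in nbhd adj (v k1)] in
  let E2 := edges adj :\: E1 in
  E2 != set0 ->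
  (adj (u k1) (v k2) && adj (u k2) (v k1) && adj (v k1) (v k2))
  \/ (exists k3 : 'I_(matching_number adj), val k3 = 2%N /\
        adj (v k1) (v k2) && adj (v k2) (v k3) && adj (v k1) (v k3)).
Proof.
move=> _ hbm hs hm hbk _ hmax hX hM hP k1 k2 hk1 hk2.
exact: (main_goal hbm hs hm hbk hmax hX hM hP hk1 hk2).
Qed.
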